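(* Let $G$ be a finite group, $k\ge 1$ an integer, and $A_1,\ldots,A_k\subseteq G$ nonempty subsets such that the multiplication map $A_1\times\cdots\times A_k\to G$, $(a_1,\ldots,a_k)\mapsto a_1\cdots a_k$, is a bijection. For a subset $A\subseteq G$ write $A^{-1}A=\{g^{-1}h: g,h\in A\}$ and $AA^{-1}=\{gh^{-1}: g,h\in A\}$. Then: (i) $\mathrm{card}(A_1)$ divides the order of the subgroup of $G$ generated by $A_1^{-1}A_1$; this subgroup equals the subgroup generated by $g^{-1}A_1$ for any $g\in A_1$. Moreover, the order of this subgroup equals the order of the subgroup generated by $A_1A_1^{-1}$, which equals the subgroup generated by $A_1g^{-1}$ for any $g\in A_1$. (ii) $\mathrm{card}(A_k)$ divides the order of the subgroup of $G$ generated by $A_kA_k^{-1}$; this subgroup equals the subgroup generated by $A_kg^{-1}$ for any $g\in A_k$. Moreover, the order of this subgroup equals the order of the subgroup generated by $A_k^{-1}A_k$, which equals the subgroup generated by $g^{-1}A_k$ for any $g\in A_k$. (iii) For each $i$ with $1<i<k$, $\mathrm{card}(A_i)$ divides the order of the normal subgroup of $G$ generated by $A_i^{-1}A_i$; this normal subgroup equals the normal subgroup generated by $g^{-1}A_i$ for any $g\in A_i$, and also equals the normal subgroup generated by $A_iA_i^{-1}$, and the normal subgroup generated by $A_ig^{-1}$ for any $g\in A_i$. *)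

(* Defs.v *)
From mathcomp Require Import all_boot all_order all_fingroup.
Set Implicit Arguments. Unset Strict Implicit. Unset Printing Implicit Defensive.
Local Open Scope group_scope.

Definition mul_bij (gT : finGroupType) (k : nat) (A : 'I_k -> {set gT}) : Prop :=
  forall g : gT, exists! f : {ffun 'I_k -> gT},
    (forall i, f i \in A i) /\ \prod_(i < k) f i = g.

Definition normal_closure (gT : finGroupType) (A : {set gT}) : {set gT} :=
  << class_support A [set: gT] >>.

(* Main.v *)
Require Import Defs.
From mathcomp Require Import all_boot all_order all_fingroup.
Set Implicit Arguments. Unset Strict Implicit. Unset Printing Implicit Defensive.
Local Open Scope group_scope.

Lemma L1 (gT : finGroupType) (X : {set gT}) g : g \in X ->
  (<<X^-1 * X>>)%g = (<<g^-1 *: X>>)%g.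
Proof.
move=> gX; apply/eqP; rewrite eqEsubset !gen_subG; apply/andP; split.
apply/subsetP=> x /mulsgP [u v uX vX ->]; rewrite mem_invg in uX.
  have -> : u * v = (g^-1 * u^-1)^-1 * (g^-1 * v) by rewrite invMg !invgK -mulgA mulKVg.
  by rewrite groupM ?groupV // mem_gen // mem_lcoset invgK mulKVg.
apply/subsetP=> x; rewrite mem_lcoset invgK => gx.
  have -> : x = g^-1 * (g * x) by rewrite mulKg.
  by rewrite mem_gen // mem_mulg // mem_invg invgK.
Qed.

Lemma L2 (gT : finGroupType) (X : {set gT}) g : g \in X ->
  (<<X * X^-1>>)%g = (<<X :* g^-1>>)%g.
Proof.
move=> gX; apply/eqP; rewrite eqEsubset !gen_subG; apply/andP; split.
apply/subsetP=> x /mulsgP [u v uX vX ->]; rewrite mem_invg in vX.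
  have -> : u * v = (u * g^-1) * (v^-1 * g^-1)^-1 by rewrite invMg !invgK -mulgA mulKg.
  by rewrite groupM ?groupV // mem_gen // mem_rcoset invgK mulgKV.
apply/subsetP=> x; rewrite mem_rcoset invgK => gx.
  have -> : x = (x * g) * g^-1 by rewrite mulgK.
  by rewrite mem_gen // mem_mulg // mem_invg invgK.
Qed.

Lemma L3 (gT : finGroupType) (X : {set gT}) g : g \in X ->
  #|(<<X^-1 * X>>)%g| = #|(<<X * X^-1>>)%g|.
Proof.
move=> gX; rewrite (L1 gX) (L2 gX).
have -> : X :* g^-1 = (g^-1 *: X) :^ g^-1.
  by apply/setP=> y; rewrite mem_rcoset mem_conjg mem_lcoset !invgK conjgE mulKVg.
by rewrite genJ cardJg.
Qed.

Lemma ncl_group (gT : finGroupType) (X : {set gT}) : group_set (normal_closure X).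
Proof. exact: groupP. Qed.

Lemma ncl_sub (gT : finGroupType) (X : {set gT}) : X \subset normal_closure X.
Proof. apply: subset_trans (sub_class_support _ _) _; exact: subset_gen. Qed.

Lemma ncl_norm (gT : finGroupType) (X : {set gT}) y : y \in 'N(normal_closure X).
Proof.
apply: (subsetP (norm_gen _)); apply: (subsetP (class_support_norm _ [set: gT])).
by rewrite inE.
Qed.

Lemma ncl_min (gT : finGroupType) (X Y : {set gT}) :
  X \subset normal_closure Y -> normal_closure X \subset normal_closure Y.
Proof.
move=> sXY; rewrite /normal_closure gen_subG; apply: class_support_sub_norm => //.
by apply/subsetP=> y _; apply: ncl_norm.
Qed.

Lemma ncl_eq (gT : finGroupType) (X Y : {set gT}) :
  X \subset normal_closure Y -> Y \subset normal_closure X ->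
  normal_closure X = normal_closure Y.
Proof. by move=> h1 h2; apply/eqP; rewrite eqEsubset !ncl_min. Qed.

Lemma ncl_mem (gT : finGroupType) (X : {set gT}) x : x \in X -> x \in normal_closure X.
Proof. by move/(subsetP (ncl_sub X)). Qed.

Lemma ncl_conj (gT : finGroupType) (X : {set gT}) x y :
  x \in normal_closure X -> x ^ y \in normal_closure X.
Proof. by rewrite memJ_norm // ncl_norm. Qed.

Lemma L4 (gT : finGroupType) (X : {set gT}) g : g \in X ->
  [/\ normal_closure (X^-1 * X) = normal_closure (g^-1 *: X),
      normal_closure (X^-1 * X) = normal_closure (X * X^-1) &
      normal_closure (X^-1 * X) = normal_closure (X :* g^-1)].
Proof.
move=> gX.
have e1 : normal_closure (X^-1 * X) = normal_closure (g^-1 *: X).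
  apply: ncl_eq; apply/subsetP=> x.
    case/mulsgP=> [u v uX vX ->]; rewrite mem_invg in uX.
    have -> : u * v = (g^-1 * u^-1)^-1 * (g^-1 * v) by rewrite invMg !invgK -mulgA mulKVg.
    rewrite /normal_closure groupM ?groupV //; apply: ncl_mem;
      by rewrite mem_lcoset invgK mulKVg.
  rewrite mem_lcoset invgK => gx.
  have -> : x = g^-1 * (g * x) by rewrite mulKg.
  by apply: ncl_mem; rewrite mem_mulg // mem_invg invgK.
have e2 : normal_closure (X * X^-1) = normal_closure (X :* g^-1).
  apply: ncl_eq; apply/subsetP=> x.
    case/mulsgP=> [u v uX vX ->]; rewrite mem_invg in vX.
    have -> : u * v = (u * g^-1) * (v^-1 * g^-1)^-1 by rewrite invMg !invgK -mulgA mulKg.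
    rewrite /normal_closure groupM ?groupV //; apply: ncl_mem;
      by rewrite mem_rcoset invgK mulgKV.
  rewrite mem_rcoset invgK => gx.
  have -> : x = (x * g) * g^-1 by rewrite mulgK.
  by apply: ncl_mem; rewrite mem_mulg // mem_invg invgK.
have e3 : normal_closure (g^-1 *: X) = normal_closure (X :* g^-1).
  apply: ncl_eq; apply/subsetP=> x.
    rewrite mem_lcoset invgK => gx.
    have -> : x = (g * x * g^-1) ^ g by rewrite conjgE !mulgA mulVg mul1g mulgKV.
    by apply/ncl_conj/ncl_mem; rewrite mem_rcoset invgK mulgKV.
  rewrite mem_rcoset invgK => gx.
  have -> : x = (g^-1 * (x * g)) ^ g^-1 by rewrite conjgE invgK !mulgA mulgV mul1g mulgK.
  by apply/ncl_conj/ncl_mem; rewrite mem_lcoset invgK mulKVg.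
by split; rewrite ?e1 ?e2 ?e3.
Qed.

Definition pre (gT : finGroupType) n (i : nat) (f : {ffun 'I_n.+1 -> gT}) :=
  \prod_(0 <= j < i) f (inord j).
Definition post (gT : finGroupType) n (i : nat) (f : {ffun 'I_n.+1 -> gT}) :=
  \prod_(i.+1 <= j < n.+1) f (inord j).

Lemma prod_split (gT : finGroupType) n (f : {ffun 'I_n.+1 -> gT}) (i : 'I_n.+1) :
  \prod_(j < n.+1) f j = pre i f * f i * post i f.
Proof.
rewrite (eq_bigr (fun j : 'I_n.+1 => f (inord (val j)))); last by move=> j _; rewrite inord_val.
rewrite -(big_mkord xpredT (fun j => f (inord j))).
rewrite (@big_cat_nat _ _ _ i) //=; last exact: ltnW.
by rewrite (@big_ltn _ _ _ i) // inord_val mulgA.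
Qed.

Definition FA (gT : finGroupType) n (A : 'I_n.+1 -> {set gT}) :=
  [set f : {ffun 'I_n.+1 -> gT} | [forall j, f j \in A j]].
Definition Bset (gT : finGroupType) n (A : 'I_n.+1 -> {set gT}) (i : 'I_n.+1) :=
  [set pre i f | f in FA A].
Definition Cset (gT : finGroupType) n (A : 'I_n.+1 -> {set gT}) (i : 'I_n.+1) :=
  [set post i f | f in FA A].

Lemma fact_surj (gT : finGroupType) n (A : 'I_n.+1 -> {set gT}) (hbij : mul_bij A)
  (i : 'I_n.+1) x :
  exists b a c, [/\ b \in Bset A i, a \in A i, c \in Cset A i & x = b * a * c].
Proof.
have [f [[fA fx] _]] := hbij x.
have fF : f \in FA A by rewrite inE; apply/forallP.
exists (pre i f), (f i), (post i f); split => //; first exact: imset_f.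
  exact: imset_f.
by rewrite -prod_split.
Qed.

Lemma fact_inj (gT : finGroupType) n (A : 'I_n.+1 -> {set gT}) (hbij : mul_bij A)
  (i : 'I_n.+1) b a c b' a' c' :
  b \in Bset A i -> a \in A i -> c \in Cset A i ->
  b' \in Bset A i -> a' \in A i -> c' \in Cset A i ->
  b * a * c = b' * a' * c' -> [/\ b = b', a = a' & c = c'].
Proof.
have mk : forall b a c, b \in Bset A i -> a \in A i -> c \in Cset A i ->
  exists h, [/\ h \in FA A, pre i h = b, h i = a & post i h = c].
  move=> b0 a0 c0 /imsetP [f1 f1F ->] a0A /imsetP [f2 f2F ->].
  move: f1F f2F; rewrite !inE => /forallP f1F /forallP f2F.
  exists [ffun j : 'I_n.+1 => if (j < i)%N then f1 j else if j == i then a0 else f2 j].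
  split.
  rewrite inE; apply/forallP=> j; rewrite ffunE.
    by case: ifP => _ //; case: eqP => [->|_].
  apply: eq_big_nat => j /andP [_ lji]; rewrite ffunE inordK ?lji //.
    exact: ltn_trans lji (ltn_ord i).
  by rewrite ffunE ltnn eqxx.
  apply: eq_big_nat => j /andP [lij ljn]; rewrite ffunE inordK //.
    rewrite ltnNge ltnW //=.
    have -> : (inord j == i) = false.
      apply/negbTE; apply/eqP=> e; move: lij; rewrite -e inordK // ltnn //.
    by [].
move=> bB aA cC b'B a'A c'C e.
have [h [hF hb ha hc]] := mk _ _ _ bB aA cC.
have [h' [h'F h'b h'a h'c]] := mk _ _ _ b'B a'A c'C.
have [f0 [_ u]] := hbij (b * a * c).
have E1 := u h; have E2 := u h'.
rewrite inE in hF; rewrite inE in h'F.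
have hh : h = h'.
  rewrite -E1; first last.
    split; first exact/forallP.
    by rewrite (prod_split h i) hb ha hc.
  rewrite -E2 //.
  split; first exact/forallP.
  by rewrite (prod_split h' i) h'b h'a h'c.
rewrite hh h'b in hb; rewrite hh h'a in ha; rewrite hh h'c in hc.
by rewrite hb ha hc.
Qed.

Lemma fact_div (gT : finGroupType) (B A C S : {set gT}) (P : gT -> gT -> bool) :
  (forall x, exists b a c, [/\ b \in B, a \in A, c \in C & x = b * a * c]) ->
  (forall b a c b' a' c', b \in B -> a \in A -> c \in C ->
     b' \in B -> a' \in A -> c' \in C ->
     b * a * c = b' * a' * c' -> [/\ b = b', a = a' & c = c']) ->
  (forall b a c, b \in B -> a \in A -> c \in C -> (b * a * c \in S) = P b c) ->
  (#|A| %| #|S|)%N.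
Proof.
move=> surj inj hS.
pose Q := [set p : gT * gT | [&& p.1 \in B, p.2 \in C & P p.1 p.2]].
pose T := [set t : gT * gT * gT | [&& t.1.1 \in B, t.1.2 \in A, t.2 \in C & P t.1.1 t.2]].
have ST : S = [set t.1.1 * t.1.2 * t.2 | t in T].
  apply/setP=> x; apply/idP/imsetP.
    move=> xS; have [b [a [c [bB aA cC ex]]]] := surj x.
    exists ((b, a), c) => //; by rewrite inE /= bB aA cC -(hS b a c) // -ex.
  case=> [[[b a] c]]; rewrite inE /= => /and4P [bB aA cC Pbc] ->.
  by rewrite hS.
have TE : T = [set ((p.2.1, p.1), p.2.2) | p in setX A Q].
  apply/setP=> [[[b a] c]]; rewrite inE /=; apply/idP/imsetP.
    case/and4P=> bB aA cC Pbc; exists (a, (b, c)) => //.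
    by rewrite !inE /= aA bB cC Pbc.
  case=> [[a' [b' c']]]; rewrite !inE /= => /andP [aA /and3P [bB cC Pbc]] [-> -> ->].
  by rewrite bB aA cC Pbc.
rewrite ST card_in_imset; last first.
  move=> [[b a] c] [[b' a'] c']; rewrite !inE /=.
  move=> /and4P [bB aA cC _] /and4P [b'B a'A c'C _] e.
  by have [-> -> ->] := inj _ _ _ _ _ _ bB aA cC b'B a'A c'C e.
rewrite TE card_in_imset; last by move=> [a [b c]] [a' [b' c']] _ _ [-> -> ->].
by rewrite cardsX dvdn_mulr.
Qed.
Theorem lemma2p1 (gT : finGroupType) (k : nat) (hk : (0 < k)%N)
  (A : 'I_k -> {set gT})
  (hne : forall i, A i != set0)
  (hbij : mul_bij A) :
  (* (i) first factor *)
  (forall i : 'I_k, nat_of_ord i = 0%N ->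
     [/\ (#|A i| %| #|(<<(A i)^-1 * A i>>)%g|)%N,
         (forall g, g \in A i -> (<<(A i)^-1 * A i>>)%g = (<<g^-1 *: A i>>)%g),
         #|(<<(A i)^-1 * A i>>)%g| = #|(<<A i * (A i)^-1>>)%g| &
         (forall g, g \in A i -> (<<A i * (A i)^-1>>)%g = (<<A i :* g^-1>>)%g)])
  /\
  (* (ii) last factor *)
  (forall i : 'I_k, nat_of_ord i = k.-1 ->
     [/\ (#|A i| %| #|(<<A i * (A i)^-1>>)%g|)%N,
         (forall g, g \in A i -> (<<A i * (A i)^-1>>)%g = (<<A i :* g^-1>>)%g),
         #|(<<A i * (A i)^-1>>)%g| = #|(<<(A i)^-1 * A i>>)%g| &
         (forall g, g \in A i -> (<<(A i)^-1 * A i>>)%g = (<<g^-1 *: A i>>)%g)])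
  /\
  (* (iii) middle factors *)
  (forall i : 'I_k, (0 < i < k.-1)%N ->
     [/\ (#|A i| %| #|normal_closure ((A i)^-1 * A i)%g|)%N,
         (forall g, g \in A i ->
            normal_closure ((A i)^-1 * A i)%g = normal_closure (g^-1 *: A i)%g),
         normal_closure ((A i)^-1 * A i)%g = normal_closure (A i * (A i)^-1)%g &
         (forall g, g \in A i ->
            normal_closure ((A i)^-1 * A i)%g = normal_closure (A i :* g^-1)%g)]).
Proof.
case: k hk A hne hbij => // n _ A hne hbij.
have fdiv : forall (i : 'I_n.+1) (S : {set gT}) (P : gT -> gT -> bool),
    (forall b a c, b \in Bset A i -> a \in A i -> c \in Cset A i ->
       (b * a * c \in S) = P b c) -> (#|A i| %| #|S|)%N.
  move=> i S P hS; apply: (fact_div _ _ hS); first exact: fact_surj.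
  exact: fact_inj.
split; [|split].
  move=> i i0; have /set0Pn [g gA] := hne i; split.
  rewrite -(card_lcoset (<<(A i)^-1 * A i>>)%g g).
    apply: (fdiv i _ (fun b c => c \in (<<(A i)^-1 * A i>>)%g)) => b a c bB aA cC.
    case/imsetP: bB => f _ ->; rewrite /pre i0 big_geq // mul1g.
    rewrite mem_lcoset mulgA groupMl // mem_gen // mem_mulg // mem_invg invgK //.
  by move=> g' g'A; apply: L1.
  exact: L3 gA.
  by move=> g' g'A; apply: L2.
  move=> i i0; have /set0Pn [g gA] := hne i; split.
  rewrite -(card_rcoset (<<A i * (A i)^-1>>)%g g).
    apply: (fdiv i _ (fun b c => b \in (<<A i * (A i)^-1>>)%g)) => b a c bB aA cC.
    case/imsetP: cC => f _ ->; rewrite /post i0 /= big_geq // mulg1.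
    rewrite mem_rcoset -mulgA groupMr // mem_gen // mem_mulg // mem_invg invgK //.
  by move=> g' g'A; apply: L2.
  exact: esym (L3 gA).
  by move=> g' g'A; apply: L1.
move=> i _; have /set0Pn [g gA] := hne i.
have [e1 e2 e3] := L4 gA.
split.
apply: (fdiv i _ (fun b c => b * g * c \in normal_closure ((A i)^-1 * A i))).
  move=> b a c bB aA cC.
  have nN : (g^-1 * a) ^ c \in normal_closure ((A i)^-1 * A i).
    by apply/ncl_conj/ncl_mem; rewrite mem_mulg // mem_invg invgK.
  have -> : b * a * c = (b * g * c) * (g^-1 * a) ^ c by rewrite conjgE !mulgA !mulgK.
  by move: nN; rewrite /normal_closure => nN; rewrite groupMr.
by move=> g' g'A; have [] := L4 g'A.
by [].
by move=> g' g'A; have [] := L4 g'A.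
Qed.
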